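(* Let $\mathcal H$ be a Hilbert space over $\mathbb K\in\{\mathbb R,\mathbb C\}$ and let $\mathbf{x},\mathbf{y}\in\mathcal H$ be norm one vectors. Then there is a (nonzero) continuous symmetric bilinear form $T:\mathcal H\times\mathcal H\to\mathbb K$ that attains its norm at $(\mathbf{x},\mathbf{y})$.
   Context: The norm of a bilinear form is $\|T\|=\sup\{|T(\mathbf{w}_1,\mathbf{w}_2)|:\|\mathbf{w}_1\|,\|\mathbf{w}_2\|\le1\}$, and $T$ attains its norm at $(\mathbf{x},\mathbf{y})$ if $|T(\mathbf{x},\mathbf{y})|=\|T\|$. Bilinear means $\mathbb K$-bilinear. *)

(* Defs.v *)
From mathcomp Require Import all_boot all_order all_algebra.
From mathcomp Require Import all_classical all_reals all_analysis.
From mathcomp Require Import complex.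
Import Order.TTheory GRing.Theory Num.Theory ComplexField.
Import numFieldNormedType.Exports.
Local Open Scope ring_scope.

Set Implicit Arguments. Unset Strict Implicit. Unset Printing Implicit Defensive.

(* A Hilbert space over K is a complete normed space V over K (the library's
   [completeNormedModType K]) whose norm is induced by an inner product [ip]:
   [ip] is linear in its first argument, conjugate-symmetric w.r.t. the field
   conjugation [conj] (the identity for K = R, complex conjugation for K = C),
   and satisfies  ||v||^2 = <v, v>  (which gives positive definiteness). *)
Definition is_inner_product (K : numFieldType) (conj : K -> K)
    (V : normedModType K) (ip : V -> V -> K) : Prop :=
  [/\ (forall (a : K) (u v w : V), ip (a *: u + v) w = a * ip u w + ip v w),
      (forall u v : V, ip u v = conj (ip v u)) &
      (forall v : V, `|v| ^+ 2 = ip v v)].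

Definition bilinear_form (K : numFieldType) (V : normedModType K)
    (T : V -> V -> K) : Prop :=
  (forall (a : K) (u v w : V), T (a *: u + v) w = a * T u w + T v w) /\
  (forall (a : K) (u v w : V), T w (a *: u + v) = a * T w u + T w v).

Definition symmetric_form (K : numFieldType) (V : normedModType K)
    (T : V -> V -> K) : Prop := forall u v : V, T u v = T v u.

Definition continuous_form (K : numFieldType) (V : normedModType K)
    (T : V -> V -> K) : Prop := continuous (fun p : V * V => T p.1 p.2).

(* T attains its norm ||T|| = sup {|T(w1,w2)| : ||w1||, ||w2|| <= 1} at (x,y):
   since x, y lie in the closed unit ball, |T(x,y)| = ||T|| says exactly that
   |T(x,y)| is the largest element of that set of values. *)
Definition attains_norm_at (K : numFieldType) (V : normedModType K)
    (T : V -> V -> K) (x y : V) : Prop :=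
  `|x| <= 1 /\ `|y| <= 1 /\
  (forall w1 w2 : V, `|w1| <= 1 -> `|w2| <= 1 -> `|T w1 w2| <= `|T x y|).

Definition prop23_for (K : numFieldType) (conj : K -> K) : Prop :=
  forall (V : completeNormedModType K) (ip : V -> V -> K),
    is_inner_product conj ip ->
    forall x y : V, `|x| = 1 -> `|y| = 1 ->
      exists T : V -> V -> K,
        [/\ bilinear_form T, symmetric_form T, continuous_form T,
            (exists u v : V, T u v != 0) & attains_norm_at T x y].

(* Main.v *)
Require Import Defs.
From mathcomp Require Import all_boot all_order all_algebra.
From mathcomp Require Import all_classical all_reals all_analysis.
From mathcomp Require Import complex.
From mathcomp Require Import ring.
Import Order.TTheory GRing.Theory Num.Theory ComplexField.
Import numFieldNormedType.Exports.
Local Open Scope ring_scope.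

Section Gen.
Variable K : numFieldType.
Variable conj : K -> K.
Hypothesis cD : forall a b, conj (a + b) = conj a + conj b.
Hypothesis cM : forall a b, conj (a * b) = conj a * conj b.
Hypothesis cK : forall a, conj (conj a) = a.
Hypothesis cN : forall a, a * conj a = `|a| ^+ 2.
Hypothesis cnorm : forall a, `|conj a| = `|a|.
Hypothesis cpos : forall a, 0 <= a -> conj a = a.

Lemma c0 : conj 0 = 0. Proof. exact: cpos. Qed.
Lemma c1 : conj 1 = 1. Proof. exact: cpos. Qed.
Lemma cNeg a : conj (- a) = - conj a.
Proof. apply/eqP; rewrite -subr_eq0 opprK -cD addNr c0 //. Qed.
Lemma cB a b : conj (a - b) = conj a - conj b.
Proof. by rewrite cD cNeg. Qed.

Variable V : normedModType K.
Variable ip : V -> V -> K.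
Hypothesis Hip : is_inner_product conj ip.

Lemma ipL a u v w : ip (a *: u + v) w = a * ip u w + ip v w.
Proof. by case: Hip. Qed.
Lemma ipS u v : ip u v = conj (ip v u).
Proof. by case: Hip. Qed.
Lemma ipN v : ip v v = `|v| ^+ 2.
Proof. by case: Hip. Qed.

Lemma ip0l w : ip 0 w = 0.
Proof.
have := ipL 1 0 0 w; rewrite scale1r addr0 mul1r.
by rewrite -{1}[ip 0 w]addr0 => /addrI <-.
Qed.
Lemma ipDl u v w : ip (u + v) w = ip u w + ip v w.
Proof. by rewrite -{1}[u]scale1r ipL mul1r. Qed.
Lemma ipZl a u w : ip (a *: u) w = a * ip u w.
Proof. by rewrite -[a *: u]addr0 ipL ip0l addr0. Qed.
Lemma ipBl u v w : ip (u - v) w = ip u w - ip v w.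
Proof. by rewrite ipDl -scaleN1r ipZl mulN1r. Qed.
Lemma ipDr u v w : ip w (u + v) = ip w u + ip w v.
Proof. by rewrite ipS ipDl cD -!ipS. Qed.
Lemma ipZr a u w : ip w (a *: u) = conj a * ip w u.
Proof. by rewrite ipS ipZl cM -!ipS. Qed.
Lemma ipBr u v w : ip w (u - v) = ip w u - ip w v.
Proof. by rewrite ipDr -scaleN1r ipZr cNeg c1 mulN1r. Qed.
Lemma ip0r w : ip w 0 = 0.
Proof. by rewrite ipS ip0l c0. Qed.

Lemma cinvpos (a : K) : 0 <= a -> conj a^-1 = a^-1.
Proof. by move=> a0; rewrite cpos // invr_ge0. Qed.

Lemma vanish (a x E : K) : a / E * (x - x / E * E) = 0.
Proof.
have [->|E0] := eqVneq E 0; first by rewrite invr0 mulr0 mul0r.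
by rewrite divfK // subrr mulr0.
Qed.

Lemma bessel u e f : ip e f = 0 -> ip f e = 0 ->
  `|ip u e| ^+ 2 / `|e| ^+ 2 + `|ip u f| ^+ 2 / `|f| ^+ 2 <= `|u| ^+ 2.
Proof.
move=> ef fe.
set A := ip u e; set B := ip u f.
set c := A / `|e| ^+ 2; set d := B / `|f| ^+ 2.
set p := u - c *: e - d *: f.
have hp z : ip p z = ip u z - c * ip e z - d * ip f z by rewrite /p !ipBl !ipZl.
have := exprn_ge0 2 (normr_ge0 p); rewrite -(ipN p).
rewrite {1}/p !ipBl !ipZl (ipS u p) (ipS e p) (ipS f p) !hp.
rewrite ef fe !ipN -/A -/B (ipS e u) (ipS f u) -/A -/B.
rewrite /c /d !(cB, cM, cK, c0) !cinvpos ?exprn_ge0 ?normr_ge0 //.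
rewrite -!expr2 (cpos _ (normr_ge0 u)) (cpos _ (normr_ge0 e)) (cpos _ (normr_ge0 f)).
rewrite !mulr0 !subr0 vanish.
rewrite subr0 vanish subr0.
rewrite (mulrAC (conj A)) (mulrAC (conj B)) !(mulrC (conj _) _) !cN.
by rewrite -addrA -opprD subr_ge0.
Qed.
Lemma CS u e : `|ip u e| <= `|u| * `|e|.
Proof.
have [->|e0] := eqVneq e 0; first by rewrite ip0r !normr0 mulr0.
have := bessel u e 0 (ip0r e) (ip0l e).
rewrite ip0r normr0 expr0n /= mul0r addr0.
have he : 0 < `|e| ^+ 2 by rewrite exprn_gt0 // normr_gt0.
rewrite ler_pdivrMr // -exprMn.
by rewrite (ler_pXn2r (n:=2)) // nnegrE ?mulr_ge0.
Qed.

Lemma ip_cont e : continuous (fun u => ip u e).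
Proof.
move=> u0; apply/cvgrPdist_le => eps eps0.
have he : 0 < `|e| + 1 by rewrite ltr_wpDl.
near=> t.
rewrite -ipBl; apply: le_trans (CS _ _) _.
have : `|u0 - t| <= eps / (`|e| + 1) by near: t; apply: cvgr_dist_le => //; rewrite divr_gt0.
rewrite ler_pdivlMr // => h; apply: le_trans h.
by rewrite ler_wpM2l // lerDl.
Unshelve. all: by end_near.
Qed.

Lemma amgm (a b : K) : 0 <= a -> 0 <= b -> 2 * (a * b) <= a ^+ 2 + b ^+ 2.
Proof.
move=> a0 b0; rewrite -subr_ge0.
have -> : a ^+ 2 + b ^+ 2 - 2 * (a * b) = (a - b) ^+ 2 by ring.
by rewrite -real_normK ?exprn_ge0 // realB ?ger0_real.
Qed.

Lemma main (x y : V) : `|x| = 1 -> `|y| = 1 ->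
  exists T : V -> V -> K,
        [/\ Defs.bilinear_form T, Defs.symmetric_form T, Defs.continuous_form T,
            (exists u v : V, T u v != 0) & Defs.attains_norm_at T x y].
Proof.
move=> hx hy.
pose z := ip y x. pose r := `|z|.
have r0 : 0 <= r := normr_ge0 z.
pose om := if z == 0 then 1 else conj z / r.
have omz : om * z = r.
  rewrite /om; case: eqP => [z0|/eqP z0]; first by rewrite z0 mulr0 /r z0 normr0.
  by rewrite mulrAC (mulrC (conj z)) cN /r expr2 mulfK // normr_eq0.
have omn : `|om| = 1.
  rewrite /om; case: eqP => [_|/eqP z0]; first by rewrite normr1.
  by rewrite normrM normfV cnorm /r normr_id divff // normr_eq0.
have omc : om * conj om = 1 by rewrite cN omn expr1n.
have ipxx : ip x x = 1 by rewrite ipN hx expr1n.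
have ipyy : ip y y = 1 by rewrite ipN hy expr1n.
have ipxy : ip x y = conj z by exact: ipS.
have cr : conj r = r := cpos _ r0.
have zE : z = conj om * r by rewrite -omz mulrA (mulrC (conj om)) omc mul1r.
pose e := x + om *: y; pose f := x - om *: y.
have xe : ip x e = 1 + r by rewrite /e ipDr ipZr ipxx ipxy -cM omz cr.
have ye : ip y e = conj om * (1 + r) by rewrite /e ipDr ipZr ipyy -/z zE; ring.
have xf : ip x f = 1 - r by rewrite /f ipBr ipZr ipxx ipxy -cM omz cr.
have yf : ip y f = conj om * (r - 1) by rewrite /f ipBr ipZr ipyy -/z zE; ring.
have ef : ip e f = 0.
  rewrite /e ipDl ipZl xf yf mulrA omc; ring.
have fe : ip f e = 0 by rewrite ipS ef c0.
have hE : `|e| ^+ 2 = 2 * (1 + r).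
  by rewrite -ipN {1}/e ipDl ipZl xe ye mulrA omc; ring.
have hF : `|f| ^+ 2 = 2 * (1 - r).
  by rewrite -ipN {1}/f ipBl ipZl xf yf mulrA omc; ring.
pose T u v := ip u e * ip v e / `|e| ^+ 2 - ip u f * ip v f / `|f| ^+ 2.
have Txy : T x y = conj om.
  rewrite /T xe ye xf yf hE hF.
  have r1 : 1 + r != 0 by rewrite gt_eqF // ltr_pwDl.
  have [->|r1'] := eqVneq r 1.
    rewrite subrr mul0r mulr0 mul0r subr0; field.
    done.
  have r2 : 1 - r != 0 by rewrite subr_eq0 eq_sym.
  field; rewrite ?r1 ?r2 //.
have nT : `|T x y| = 1 by rewrite Txy cnorm omn.
have iE : 0 <= (`|e| ^+ 2)^-1 by rewrite invr_ge0 exprn_ge0.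
have iF : 0 <= (`|f| ^+ 2)^-1 by rewrite invr_ge0 exprn_ge0.
exists T; split.
- by split=> a u v w; rewrite /T !ipL; ring.
- by move=> u v; rewrite /T (mulrC (ip u e)) (mulrC (ip u f)).
- move=> p; rewrite /T.
  have c1 g : {for p, continuous (fun q : V * V => ip q.1 g)}.
    rewrite (_ : (fun q : V * V => ip q.1 g) = (fun u => ip u g) \o fst) //.
    by apply: continuous_comp; [exact: cvg_fst | exact: ip_cont].
  have c2 g : {for p, continuous (fun q : V * V => ip q.2 g)}.
    rewrite (_ : (fun q : V * V => ip q.2 g) = (fun u => ip u g) \o snd) //.
    by apply: continuous_comp; [exact: cvg_snd | exact: ip_cont].
  apply: cvgB; apply: cvgM; (try apply: cvgM); (try exact: c1); (try exact: c2); exact: cvg_cst.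
- by exists x, y; rewrite -normr_eq0 nT oner_neq0.
split; first by rewrite hx.
split; first by rewrite hy.
move=> w1 w2 h1 h2; rewrite nT /T.
apply: le_trans (ler_normB _ _) _.
rewrite !normrM !(ger0_norm iE) !(ger0_norm iF).
have B1 := bessel w1 e f ef fe.
have B2 := bessel w2 e f ef fe.
have n1 : `|w1| ^+ 2 <= 1 by rewrite exprn_ile1.
have n2 : `|w2| ^+ 2 <= 1 by rewrite exprn_ile1.
have two : (0 : K) < 2 by rewrite ltr0n.
rewrite -(ler_pM2l two) mulr1 mulrDr.
apply: (@le_trans _ _ ((`|ip w1 e| ^+ 2 + `|ip w2 e| ^+ 2) / `|e| ^+ 2 +
   (`|ip w1 f| ^+ 2 + `|ip w2 f| ^+ 2) / `|f| ^+ 2)).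
  by apply: lerD; rewrite mulrA; apply: ler_wpM2r => //; apply: amgm.
have -> : (`|ip w1 e| ^+ 2 + `|ip w2 e| ^+ 2) / `|e| ^+ 2 +
   (`|ip w1 f| ^+ 2 + `|ip w2 f| ^+ 2) / `|f| ^+ 2 =
   (`|ip w1 e| ^+ 2 / `|e| ^+ 2 + `|ip w1 f| ^+ 2 / `|f| ^+ 2) +
   (`|ip w2 e| ^+ 2 / `|e| ^+ 2 + `|ip w2 f| ^+ 2 / `|f| ^+ 2) by ring.
have -> : (2 : K) = 1 + 1 by [].
apply: lerD; [exact: le_trans B1 n1 | exact: le_trans B2 n2].
Qed.


End Gen.

Theorem proposition2p3 :
  (forall R : realType, prop23_for (@id R)) /\
  (forall R : realType, prop23_for (fun z : R[i] => z^*)).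
Proof.
split=> R V ip Hip x y hx hy.
  have hN : forall a : R, a * id a = `|a| ^+ 2.
    by move=> a /=; rewrite -expr2 real_normK // num_real.
  have hD : forall a b : R, id (a + b) = id a + id b by [].
  have hM : forall a b : R, id (a * b) = id a * id b by [].
  have hK : forall a : R, id (id a) = a by [].
  have hn : forall a : R, `|id a| = `|a| by [].
  have hp : forall a : R, 0 <= a -> id a = a by [].
  exact (@main R id hD hM hK hN hn hp V ip Hip x y hx hy).
  have hD : forall a b : R[i], (a + b)^* = a^* + b^* by move=> a b; rewrite rmorphD.
  have hM : forall a b : R[i], (a * b)^* = a^* * b^* by move=> a b; rewrite rmorphM.
  have hK : forall a : R[i], a^*^* = a by move=> a; rewrite conjCK.
  have hN : forall a : R[i], a * a^* = `|a| ^+ 2 by move=> a; rewrite normCK.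
  have hn : forall a : R[i], `|a^*| = `|a| by move=> a; rewrite norm_conjC.
  have hp : forall a : R[i], 0 <= a -> a^* = a by move=> a a0; rewrite geC0_conj.
  exact (@main R[i] _ hD hM hK hN hn hp V ip Hip x y hx hy).
Qed.
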